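(* Let $k>1$ be a fixed integer. Suppose that a semigroup $S$ (i) satisfies the identities $x\,y_1^ky_2^k\cdots y_n^k\,x\approx x\,y_n^ky_{n-1}^k\cdots y_1^k\,x$ for all $n>1$; (ii) does not satisfy the identity $x^ky^kx^k\approx x^k(y^kx^k)^{k+1}$; (iii) satisfies the identities $x^{k+2}\approx x^2$, $x^{k+1}yx\approx xyx$ and $xyx^{k+1}\approx xyx$. Then $S$ is non-finitely based.
   Context: All letters denote distinct variables; words are elements of the free semigroup over a countably infinite alphabet. $S$ satisfies $\mathbf u\approx\mathbf v$ if $\varphi(\mathbf u)=\varphi(\mathbf v)$ for every homomorphism $\varphi$ from the free semigroup to $S$. $S$ is finitely based if all its identities are derivable from a finite subset of them; otherwise non-finitely based. *)

(* Defs.v *)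
From mathcomp Require Import all_boot.
Set Implicit Arguments. Unset Strict Implicit. Unset Printing Implicit Defensive.

(* A word of the free semigroup over the alphabet nat: a NONEMPTY seq nat.
   We use seq nat and require nonemptiness wherever words are quantified. *)
Definition word := seq nat.
Definition identity := (word * word)%type.

Section Semigroup.
Variables (T : Type) (mul : T -> T -> T).

(* value of a word under an assignment phi of letters (homomorphism from the
   free semigroup); on the empty seq it is meaningless and never used. *)
Definition eval_word (phi : nat -> T) (w : word) (d : T) : T :=
  match w with
  | [::] => d
  | x :: s => foldl (fun a y => mul a (phi y)) (phi x) s
  end.

Definition satisfies (u v : word) : Prop :=
  forall phi : nat -> T, forall d : T, eval_word phi u d = eval_word phi v d.
End Semigroup.

Definition subst_word (theta : nat -> word) (w : word) : word :=
  flatten (map theta w).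

(* Equational derivability (Birkhoff's deduction system for semigroups):
   the equivalence closure of p theta(u) q ~ p theta(v) q for (u,v) in Sigma,
   theta a substitution into nonempty words, p q arbitrary (possibly empty). *)
Inductive derivable (Sigma : seq identity) : word -> word -> Prop :=
| der_refl w : derivable Sigma w w
| der_sym u v : derivable Sigma u v -> derivable Sigma v u
| der_trans u v w : derivable Sigma u v -> derivable Sigma v w ->
                    derivable Sigma u w
| der_step (u v : word) (theta : nat -> word) (p q : word) :
    (u, v) \in Sigma -> (forall x, theta x != [::]) ->
    derivable Sigma (p ++ subst_word theta u ++ q) (p ++ subst_word theta v ++ q).

Definition finitely_based (T : Type) (mul : T -> T -> T) : Prop :=
  exists Sigma : seq identity,
    (forall e, e \in Sigma -> [/\ e.1 != [::], e.2 != [::] & satisfies mul e.1 e.2])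
    /\ forall u v : word, u != [::] -> v != [::] -> satisfies mul u v ->
         derivable Sigma u v.

Definition non_finitely_based (T : Type) (mul : T -> T -> T) : Prop :=
  ~ finitely_based mul.

Definition pw (k y : nat) : word := nseq k y.

(* Main.v *)
Require Import Defs.
From mathcomp Require Import all_boot zify.
From Stdlib Require Import Classical.
Set Implicit Arguments. Unset Strict Implicit. Unset Printing Implicit Defensive.

Section Ev.
Variables (T : Type) (mul : T -> T -> T) (mulA : associative mul).

Definition evl {A : Type} (f : A -> T) (d : T) (w : seq A) : T :=
  match w with [::] => d | x :: s => foldl (fun a y => mul a (f y)) (f x) s end.

Lemma eval_evl phi w d : eval_word mul phi w d = evl phi d w.
Proof. by case: w. Qed.

Lemma foldl_mulA {A : Type} (f : A -> T) b c s :
  foldl (fun a y => mul a (f y)) (mul b c) s = mul b (foldl (fun a y => mul a (f y)) c s).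
Proof. elim: s b c => [//|y s IH] b c /=; by rewrite -mulA IH. Qed.

Lemma evl_cat {A : Type} (f : A -> T) d w1 w2 : w1 <> [::] -> w2 <> [::] ->
  evl f d (w1 ++ w2) = mul (evl f d w1) (evl f d w2).
Proof.
case: w1 => [//|x s] _; case: w2 => [//|y t] _ /=.
by rewrite foldl_cat /= foldl_mulA.
Qed.

Lemma evl_ctx {A : Type} (f : A -> T) d l X X' r : X <> [::] -> X' <> [::] ->
  evl f d X = evl f d X' -> evl f d (l ++ X ++ r) = evl f d (l ++ X' ++ r).
Proof.
move=> hX hX' e.
have H1 : forall Y, Y <> [::] -> evl f d (Y ++ r) = if r is [::] then evl f d Y else mul (evl f d Y) (evl f d r).
  by move=> Y hY; case: r => [|z r]; rewrite ?cats0 // evl_cat.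
have hXr : X ++ r <> [::] by case: (X) hX.
have hXr' : X' ++ r <> [::] by case: (X') hX'.
have E2 : evl f d (X ++ r) = evl f d (X' ++ r) by rewrite H1 // H1 // e.
case: l => [//|z l].
by rewrite (evl_cat _ _ (w1:=z::l)) // (evl_cat _ _ (w1:=z::l)) // E2.
Qed.

Lemma evl_flatten {A B : Type} (f : A -> T) d d' (psi : B -> seq A) (u : seq B) :
  u <> [::] -> (forall t, psi t <> [::]) ->
  evl f d (flatten (map psi u)) = evl (fun t => evl f d (psi t)) d' u.
Proof.
move=> + hpsi; elim: u => [//|t u IH] _.
case: u IH => [|t' u] IH /=; first by rewrite cats0.
rewrite evl_cat //; last first.
  by rewrite /=; case: (psi t') (hpsi t').
rewrite IH //= foldl_mulA //.
Qed.
End Ev.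

Section Pow.
Variables (T : Type) (mul : T -> T -> T) (mulA : associative mul).

Definition rp (a : T) (j : nat) := iter j (fun y => mul y a) a.

Lemma rp_add a i j : mul (rp a i) (rp a j) = rp a (i + j).+1.
Proof.
elim: j => [|j IH]; first by rewrite addn0.
by rewrite /rp /= -/(rp a j) mulA IH addnS.
Qed.

Lemma rp_per a k : rp a k.+1 = rp a 1 -> forall j, 0 < j -> rp a (j + k) = rp a j.
Proof.
move=> h j hj; have -> : j + k = j.-1 + k.+1 by lia.
rewrite /rp iterD -/(rp a k.+1) h /rp -iterD; congr iter; lia.
Qed.

Fixpoint cr (b : bool) (l : seq bool) : nat :=
  match l with [::] => 0 | x :: l' => (b && ~~ x) + cr x l' end.

Definition runs (l : seq bool) := cr false (l ++ [:: false]).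

Variables (E F : T) (EE : mul E E = E) (FF : mul F F = F).
Definition G := mul F E.
Definition eg (j : nat) := iter j (fun y => mul y G) E.

Lemma egE r : mul (eg r) E = eg r.
Proof. case: r => [|r] /=; first exact: EE. by rewrite /G -!mulA EE. Qed.

Definition st r (b : bool) := if b then mul (eg r) F else eg r.
Definition EF (b : bool) := if b then F else E.

Lemma st_fold l r b :
  foldl (fun a y => mul a (EF y)) (st r b) l = st (r + cr b l) (last b l).
Proof.
elim: l r b => [|x l IH] r b /=; first by rewrite addn0.
have -> : mul (st r b) (EF x) = st (r + (b && ~~ x)) x.
  case: b; case: x => /=; rewrite ?addn0 ?addn1 //=.
  - by rewrite -mulA FF.
  - by rewrite /G mulA.
  - by rewrite egE.
by rewrite IH addnA.
Qed.

Definition valb (l : seq bool) := foldl (fun a y => mul a (EF y)) E (l ++ [:: false]).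

Lemma valE l : valb l = eg (runs l).
Proof. by rewrite /valb -[E]/(st 0 false) st_fold /runs last_cat. Qed.

Variable k : nat.
Hypothesis k1 : 1 < k.
Hypothesis Gper : rp G k.+1 = rp G 1.
Hypothesis wit : eg 1 <> eg k.+1.

Lemma eg_rp j : eg j.+1 = mul E (rp G j).
Proof. elim: j => [//|j IH]; by rewrite /eg iterS -/(eg j.+1) IH /rp /= mulA. Qed.

Lemma eg_shift i j m : eg i = eg j -> eg (m + i) = eg (m + j).
Proof. by move=> h; rewrite /eg !iterD -!/(eg _) h. Qed.

Lemma eg_per j : 1 < j -> eg (j + k) = eg j.
Proof.
move=> hj; have -> : j = j.-1.+1 by lia.
by rewrite addSn !eg_rp rp_per //; lia.
Qed.

Lemma K s : 1 < s -> eg 1 = eg s -> False.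
Proof.
move=> hs h.
have h1 : forall m, eg (1 + m * s.-1) = eg 1.
  elim=> [|m IH]; first by rewrite mul0n.
  have e1 := eg_shift (m * s.-1) h.
  rewrite -IH; transitivity (eg (m * s.-1 + s)); first by congr eg; lia.
  by rewrite -e1 addnC.
have h2 : forall m, eg (k.+1 + m * k) = eg k.+1.
  elim=> [|m IH]; first by rewrite mul0n addn0.
  rewrite -IH -(@eg_per (k.+1 + m * k)); last lia.
  congr eg; rewrite mulSn; lia.
apply: wit; rewrite -(h1 k) -(h2 (s - 2)); congr eg; nia.
Qed.

Lemma K0 s : 0 < s -> eg 0 = eg s -> False.
Proof.
move=> hs h; apply: (@K s.+1); first lia.
by have := eg_shift 1 h; rewrite addn0 add1n.
Qed.

Lemma eg_one a b : 0 < a -> 0 < b -> eg a = eg b -> (a == 1) = (b == 1).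
Proof.
move=> ha hb h; case ha1: (a == 1); case hb1: (b == 1) => //.
- move/eqP: ha1 => ha1; subst a; case: (@K b) => //; lia.
- move/eqP: hb1 => hb1; subst b; case: (@K a) => //; lia.
Qed.

Lemma eg_zero a b : eg a = eg b -> (a == 0) = (b == 0).
Proof.
move=> h; case: a h => [|a]; case: b => [|b] //= h.
- by case: (K0 (isT : 0 < b.+1) h).
- by case: (K0 (isT : 0 < a.+1) (esym h)).
Qed.
End Pow.

Lemma cr_cat b l1 l2 : cr b (l1 ++ l2) = cr b l1 + cr (last b l1) l2.
Proof. by elim: l1 b => [|x l IH] b //=; rewrite IH addnA. Qed.

Lemma cr_allF l : all negb l -> cr false l = 0.
Proof. by elim: l => [|x l IH] //= /andP[/negPf -> /IH]. Qed.

Lemma cr_allT l : all id l -> cr true l = 0.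
Proof. by elim: l => [|x l IH] //= /andP[-> /IH]. Qed.

Lemma crT l : false \in l -> 0 < cr true l.
Proof.
elim: l => [//|y l IH] /=; rewrite inE => /orP[/eqP <- //|h].
by case: y; [have := IH h|]; rewrite /=; lia.
Qed.

Lemma crB b m r : true \in m -> 0 < cr b (m ++ false :: r).
Proof.
elim: m b => [//|x m IH] b /=; rewrite inE => /orP[/eqP <-|/IH h].
  by rewrite andbF add0n; apply: crT; rewrite mem_cat inE eqxx orbT.
by apply: leq_trans (h x) (leq_addl _ _).
Qed.

Lemma runs_pos l : true \in l -> 0 < runs l.
Proof. by move=> h; rewrite /runs; apply: crB. Qed.

Lemma runs_zero l : true \notin l -> runs l = 0.
Proof.
move=> h; rewrite /runs cr_allF // all_cat /= andbT.
by apply/allP => x hx; apply/negP => hx'; move: h; rewrite -hx' hx.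
Qed.

Lemma runs_contig l l1 l2 l3 : runs l = 1 -> l = l1 ++ l2 ++ l3 ->
  true \in l1 -> true \in l3 -> all id l2.
Proof.
move=> hr el h1 h3; subst l; apply/allP => x hx; apply/negPn/negP => hx'.
have hx0 : x = false by case: x hx hx'.
subst x; move: hr; case/splitPr: hx => a b.
rewrite /runs. have -> : (l1 ++ (a ++ false :: b) ++ l3) ++ [:: false] =
  ((l1 ++ a) ++ false :: [::]) ++ (b ++ l3 ++ [:: false]) by rewrite -!catA.
rewrite cr_cat last_cat /=.
have P1 : 0 < cr false ((l1 ++ a) ++ [:: false]) by apply: crB; rewrite mem_cat h1.
have P2 : 0 < cr false (b ++ l3 ++ [:: false]).
  by rewrite catA; apply: crB; rewrite mem_cat h3 orbT.
move=> H; have := leq_add P1 P2; rewrite H; by [].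
Qed.

Lemma last_allF (l : seq bool) : all negb l -> last false l = false.
Proof. by case/lastP: l => [//|s x]; rewrite all_rcons last_rcons => /andP[/negPf]. Qed.

Lemma last_allT (l : seq bool) : all id l -> last true l = true.
Proof. by case/lastP: l => [//|s x]; rewrite all_rcons last_rcons => /andP[->]. Qed.

Lemma runs_one (l1 l2 l3 : seq bool) : all negb l1 -> all id l2 -> l2 != [::] -> all negb l3 ->
  runs (l1 ++ l2 ++ l3) = 1.
Proof.
move=> h1 h2 n2 h3; rewrite /runs -!catA cr_cat cr_allF // add0n last_allF //.
case: l2 h2 n2 => [//|x l2] /= /andP[-> h2] _ /=.
rewrite cr_cat cr_allT // add0n last_allT //.
case: l3 h3 => [|y l3] /=; first by [].
by case/andP => /negPf -> h3; rewrite cr_allF //= all_cat h3.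
Qed.

Lemma runs_contig_map (A : pred nat) w w1 w2 w3 : runs (map A w) = 1 ->
  w = w1 ++ w2 ++ w3 -> has A w1 -> has A w3 -> all A w2.
Proof.
move=> hr ew h1 h3; subst w; rewrite !map_cat in hr.
have := runs_contig hr (erefl _).
have t1 : true \in map A w1 by case/hasP: h1 => x hx ax; apply/mapP; exists x.
have t3 : true \in map A w3 by case/hasP: h3 => x hx ax; apply/mapP; exists x.
by move=> /(_ t1 t3); rewrite all_map.
Qed.

Lemma cr_map0 (A : pred nat) l :
  (forall l1 x l2 y l3, l = l1 ++ x :: l2 ++ y :: l3 -> A x -> A y) ->
  cr false (map A l) = 0.
Proof.
elim: l => [//|x l IH] h /=.
case ax: (A x) => /=.
  rewrite cr_allT //; apply/allP => b /mapP[y hy ->].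
  case/splitPr: hy h => l2 l3 h; exact: (h [::] x l2 y l3).
by apply: IH => l1 x' l2 y l3 e; apply: (h (x :: l1)); rewrite e.
Qed.

Lemma runs_good (A : pred nat) P Q :
  (forall l1 x l2 y l3, P = l1 ++ x :: l2 ++ y :: l3 -> A x -> A y) ->
  (forall x, x \in Q -> ~~ A x) ->
  runs (map A P ++ [:: true; false] ++ map A Q) = 1.
Proof.
move=> hP hQ; rewrite /runs -!catA cr_cat cr_map0 // add0n /=.
rewrite andbF add0n cr_allF //= all_cat /= andbT all_map.
by apply/allP => x /hQ.
Qed.

Lemma bs1 (A : pred nat) P Q : runs (map A P ++ [:: true; false] ++ map A Q) = 1 ->
  forall x, x \in Q -> ~~ A x.
Proof.
move=> hr x hx; apply/negP => ax.
have : all id [:: false] .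
  apply: (runs_contig hr (l1 := map A P ++ [:: true]) (l3 := map A Q)).
  - by rewrite -!catA.
  - by rewrite mem_cat inE eqxx orbT.
  - by apply/mapP; exists x.
by [].
Qed.

Lemma bs2 (A : pred nat) P Q P1 x P2 y P3 :
  runs (map A P ++ [:: true; false] ++ map A Q) = 1 ->
  P = P1 ++ x :: P2 ++ y :: P3 -> A x -> ~~ A y -> False.
Proof.
move=> hr eP ax ay; subst P.
have t1 : true \in map A P1 ++ [:: A x] ++ map A P2.
  by rewrite !mem_cat ax inE eqxx /= orbT.
have t3 : true \in map A P3 ++ [:: true; false] ++ map A Q.
  by rewrite !mem_cat inE eqxx /= orbT.
have e : map A (P1 ++ x :: P2 ++ y :: P3) ++ [:: true; false] ++ map A Q =
  (map A P1 ++ [:: A x] ++ map A P2) ++ [:: A y] ++ (map A P3 ++ [:: true; false] ++ map A Q).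
  by rewrite map_cat /= map_cat /= -!catA /= -!catA.
have := runs_contig hr e t1 t3.
by rewrite /= andbT (negPf ay).
Qed.

Ltac memt := rewrite ?(mem_cat, inE, eqxx, orbT, orTb, andbT) //=.

Definition CY (w : seq nat) := forall c, c != 0 -> forall w1 w2 w3,
  w = w1 ++ w2 ++ w3 -> c \in w1 -> c \in w3 -> all (pred1 c) w2.
Definition CZ (w : seq nat) := forall w1 w2 w3,
  w = w1 ++ w2 ++ w3 -> has (predC1 0) w1 -> has (predC1 0) w3 -> all (predC1 0) w2.
Definition firsty (w : seq nat) (e : nat) := forall l1 x m,
  w = l1 ++ x :: m -> x != 0 -> x != e -> e \in l1.
Definition fy (w : seq nat) := head 0 [seq c <- w | c != 0].
Definition Ae (P g : seq nat) (ga e : nat) : pred nat :=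
  fun l => ((l != 0) && (l \in P) && (l \notin g) && (l != e)) || (l == ga).

Lemma fy_first w : firsty w (fy w).
Proof.
move=> l1 x m -> x0 xe; move: xe; rewrite /fy filter_cat /= x0.
case hf: [seq c <- l1 | c != 0] => [|z s] /=; first by rewrite eqxx.
move=> _; have : z \in [seq c <- l1 | c != 0] by rewrite hf inE eqxx.
by rewrite mem_filter => /andP[].
Qed.

Lemma fy_cat P R : has (predC1 0) P -> fy (P ++ R) = fy P.
Proof.
move=> h; rewrite /fy filter_cat.
by case hf: [seq c <- P | c != 0] => [|z s] //; move: h; rewrite has_filter hf.
Qed.

Lemma fy_mem P : has (predC1 0) P -> (fy P \in P) && (fy P != 0).
Proof.
move=> h; rewrite /fy; case hf: [seq c <- P | c != 0] => [|z s] /=.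
  by move: h; rewrite has_filter hf.
have : z \in [seq c <- P | c != 0] by rewrite hf inE eqxx.
by rewrite mem_filter andbC.
Qed.

Lemma letters_in_g P' g Q' g0 ga g1 l : CY (P' ++ g ++ Q') -> g = g0 ++ ga :: g1 ->
  all (pred1 0) g0 -> l \in P' -> l \in g -> l != 0 -> l = ga.
Proof.
move=> cy eg z0 lP lg l0; case: (eqVneq l ga) => // lga.
have lg1 : l \in g1.
  move: lg; rewrite eg mem_cat => /orP[h|]; last by rewrite inE (negPf lga).
  by move/allP: z0 => /(_ l h) /= /eqP e; rewrite e eqxx in l0.
have := cy l l0 P' (g0 ++ [:: ga]) (g1 ++ Q').
rewrite eg -!catA /= => /(_ erefl lP).
rewrite mem_cat lg1 => /(_ isT); rewrite all_cat /= andbT => /andP[_].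
by rewrite eq_sym (negPf lga).
Qed.

Lemma Ae0 P g ga e : ga != 0 -> Ae P g ga e 0 = false.
Proof. by move=> h; rewrite /Ae eqxx /= eq_sym (negPf h). Qed.

Lemma good_side P' g Q' g0 ga g1 e :
  CY (P' ++ g ++ Q') -> CZ (P' ++ g ++ Q') -> g = g0 ++ ga :: g1 ->
  all (pred1 0) g0 -> ga != 0 -> ga \notin Q' ->
  (e = 0 \/ firsty (P' ++ g ++ Q') e) ->
  runs (map (Ae P' g ga e) P' ++ [:: true; false] ++ map (Ae P' g ga e) Q') = 1.
Proof.
move=> cy cz eg z0 ga0 gaQ he; apply: runs_good.
- move=> l1 x l2 y l3 eP ax; case ay: (Ae P' g ga e y) => //.
  have x0 : x != 0 by apply/negP => /eqP ex; rewrite ex Ae0 in ax.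
  have yP : y \in P' by rewrite eP; memt.
  case: (eqVneq y 0) => [y0|y0].
  + have := cz (l1 ++ [:: x]) (l2 ++ y :: l3 ++ g0) (ga :: g1 ++ Q').
    rewrite eP eg -!catA /= -!catA /= => /(_ erefl).
    rewrite has_cat /= x0 orbT => /(_ isT).
    rewrite /= ga0 => /(_ isT); rewrite all_cat /= y0 /=.
    by rewrite andbF.
  + case yg: (y \in g).
      by have := letters_in_g cy eg z0 yP yg y0; move=> eyg; rewrite /Ae eyg eqxx orbT in ay.
    have ay' := ay.
    move: ay; rewrite /Ae y0 yP yg /= => /negbT /norP [/negPn /eqP ye _].
    have e0 : e != 0 by rewrite -ye.
    have fe : firsty (P' ++ g ++ Q') e by case: he => // he; rewrite he eqxx in e0.
    have xe : x != e.
      apply/negP => /eqP xe; have xy : x = y by rewrite xe ye.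
      by rewrite xy ay' in ax.
    have ew : P' ++ g ++ Q' = l1 ++ x :: (l2 ++ y :: l3 ++ g ++ Q').
      by rewrite eP -!catA /= -!catA.
    have el1 := fe _ _ _ ew x0 xe.
    have := cy e e0 l1 (x :: l2) (y :: l3 ++ g ++ Q').
    rewrite eP -!catA /= -!catA => /(_ erefl el1).
    by rewrite ye inE eqxx => /(_ isT) /= /andP[/eqP xe']; rewrite xe' eqxx in xe.
- move=> x xQ; apply/negP; rewrite /Ae => /orP[/andP[/andP[/andP[x0 xP] xg] _]|/eqP xga].
  + have := cy x x0 P' g Q' erefl xP xQ => /allP /(_ ga).
    rewrite eg; memt => /(_ isT) /eqP gax.
    by move: xg; rewrite eg -gax; memt.
  + by rewrite -xga xQ in gaQ.
Qed.


Lemma content_half P g Q P' Q' g0 ga g1 :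
  CY (P' ++ g ++ Q') -> CZ (P' ++ g ++ Q') -> g = g0 ++ ga :: g1 ->
  all (pred1 0) g0 -> ga != 0 -> ga \notin Q' ->
  (forall c, c \in P' ++ g ++ Q' -> c \in P ++ g ++ Q) ->
  (runs (map (Ae P' g ga 0) P' ++ [:: true; false] ++ map (Ae P' g ga 0) Q') = 1 ->
   runs (map (Ae P' g ga 0) P ++ [:: true; false] ++ map (Ae P' g ga 0) Q) = 1) ->
  forall l, l != 0 -> l \in P' -> l \notin g -> l \in P.
Proof.
move=> cy cz eg z0 ga0 gaQ hc hr l l0 lP lg.
have r1 := hr (good_side cy cz eg z0 ga0 gaQ (or_introl erefl)).
have nQ := bs1 r1.
have : l \in P ++ g ++ Q by apply: hc; rewrite mem_cat lP.
rewrite !mem_cat (negPf lg) /= => /orP[//|lQ].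
by have := nQ l lQ; rewrite /Ae l0 lP lg.
Qed.

Lemma fy_ga X g Y g0 ga g1 : CY (X ++ g ++ Y) -> g = g0 ++ ga :: g1 ->
  all (pred1 0) g0 -> ga != 0 -> ~~ has (fun l => (l != 0) && (l \notin g)) X ->
  fy (X ++ g ++ Y) = ga.
Proof.
move=> cy eg z0 ga0 hX; case hz: (has (predC1 0) X).
  rewrite fy_cat //; have /andP[m1 m2] := fy_mem hz.
  apply: (letters_in_g cy eg z0 m1) => //.
  by apply/negPn/negP => hg; move/hasPn: hX => /(_ _ m1); rewrite m2 hg.
rewrite /fy filter_cat.
have -> : [seq c <- X | c != 0] = [::].
  by apply/eqP; rewrite -[_ == _]negbK -has_filter hz.
rewrite eg /= -catA filter_cat.
have -> : [seq c <- g0 | c != 0] = [::].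
  apply/eqP; rewrite -[_ == _]negbK -has_filter; apply/hasPn => x /(allP z0) /= /eqP -> /=.
  by [].
by rewrite /= ga0.
Qed.

Lemma core P g Q P' Q' g0 ga g1 :
  CY (P ++ g ++ Q) -> CZ (P ++ g ++ Q) -> CY (P' ++ g ++ Q') -> CZ (P' ++ g ++ Q') ->
  (forall c, (c \in P ++ g ++ Q) = (c \in P' ++ g ++ Q')) ->
  g = g0 ++ ga :: g1 -> all (pred1 0) g0 -> ga != 0 -> ga \notin Q -> ga \notin Q' ->
  (forall A : pred nat, A 0 = false ->
     (runs (map A P ++ [:: true; false] ++ map A Q) == 1) =
     (runs (map A P' ++ [:: true; false] ++ map A Q') == 1)) ->
  fy (P ++ g ++ Q) = fy (P' ++ g ++ Q').
Proof.
move=> cy cz cy' cz' hc eg z0 ga0 gaQ gaQ' H.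
have cont : forall l, l != 0 -> l \notin g -> (l \in P) = (l \in P').
  move=> l l0 lg; apply/idP/idP => h.
  - apply: (content_half (P := P') (Q := Q') cy cz eg z0 ga0 gaQ) => //.
      by move=> c; rewrite hc.
    by move=> r; apply/eqP; rewrite -H ?Ae0 //; apply/eqP.
  - apply: (content_half (P := P) (Q := Q) cy' cz' eg z0 ga0 gaQ') => //.
      by move=> c; rewrite hc.
    by move=> r; apply/eqP; rewrite H ?Ae0 //; apply/eqP.
have notg : forall X Y c l, CY (X ++ g ++ Y) -> firsty (X ++ g ++ Y) c -> c \in X -> c != 0 ->
    l \in X -> l != 0 -> l \notin g -> c \notin g.
  move=> X Y c l cyX fc cX c0 lX l0 lg; apply/negP => cg.
  have cga := letters_in_g cyX eg z0 cX cg c0; subst c.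
  have lga : l != ga by apply/negP => /eqP e; rewrite e eg mem_cat inE eqxx orbT in lg.
  case/splitPr: lX cyX fc => L1 L2 cyX fc.
  have gL1 : ga \in L1 by apply: (fc L1 l (L2 ++ g ++ Y)) => //; rewrite -!catA.
  have := cyX ga ga0 L1 (l :: L2 ++ g0) (ga :: g1 ++ Y).
  rewrite eg -!catA /= -!catA => /(_ erefl gL1).
  by rewrite inE eqxx => /(_ isT) /= /andP[/eqP e]; rewrite e eqxx in lga.
case hP': (has (fun l => (l != 0) && (l \notin g)) P'); last first.
  rewrite (fy_ga cy' eg z0 ga0) ?hP' // (fy_ga cy eg z0 ga0) //.
  apply/hasPn => l lP; apply/negP => /andP[l0 lg].
  by move/hasPn: hP' => /(_ l); rewrite -cont // lP l0 lg => /(_ isT).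
case/hasP: hP' => l lP' /andP[l0 lg].
have hz' : has (predC1 0) P' by apply/hasP; exists l.
have /andP[c'P c'0] := fy_mem hz'.
have f' : firsty (P' ++ g ++ Q') (fy P') by rewrite -(fy_cat (g ++ Q') hz'); apply: fy_first.
have c'g : fy P' \notin g := notg _ _ _ _ cy' f' c'P c'0 lP' l0 lg.
have c'P0 : fy P' \in P by rewrite cont.
have hz : has (predC1 0) P by apply/hasP; exists (fy P').
have /andP[cP c0] := fy_mem hz.
have f : firsty (P ++ g ++ Q) (fy P) by rewrite -(fy_cat (g ++ Q) hz); apply: fy_first.
have cg : fy P \notin g := notg _ _ _ _ cy f cP c0 c'P0 c'0 c'g.
rewrite (fy_cat _ hz) (fy_cat _ hz').
case: (eqVneq (fy P) (fy P')) => // ne.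
set A := Ae P' g ga (fy P').
have r' := good_side cy' cz' eg z0 ga0 gaQ' (or_intror f').
have r : runs (map A P ++ [:: true; false] ++ map A Q) = 1.
  by have := H A (Ae0 _ _ _ ga0); rewrite r' eqxx => /eqP.
have [L1 [M eP]] : exists L1 M, P = L1 ++ fy P' :: M.
  by case/splitPr: c'P0 => L1 M; exists L1, M.
have c'c : fy P' != fy P by rewrite eq_sym.
have cL1 : fy P \in L1.
  by apply: (f L1 (fy P') (M ++ g ++ Q)) => //; rewrite {1}eP -!catA.
have [La [Lb eL]] : exists La Lb, L1 = La ++ fy P :: Lb.
  by case/splitPr: cL1 => La Lb; exists La, Lb.
have eP2 : P = La ++ fy P :: Lb ++ fy P' :: M by rewrite {1}eP eL -!catA.
exfalso; apply: (bs2 r eP2).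
- by rewrite /A /Ae -cont // cP c0 cg ne.
- rewrite /A /Ae eqxx !andbF /=.
  by apply/negP => /eqP e; move: c'g; rewrite e eg; memt.
Qed.

Definition fl k (s : seq nat) := flatten [seq pw k i | i <- s].
Definition wn k n := [:: 0] ++ fl k (iota 1 n) ++ [:: 0].
Definition wn' k n := [:: 0] ++ fl k (rev (iota 1 n)) ++ [:: 0].

Lemma mem_fl k s c : (c \in fl k s) = (0 < k) && (c \in s).
Proof.
elim: s => [|i s IH]; rewrite /fl /= ?andbF //.
by rewrite mem_cat -/(fl k s) IH /pw mem_nseq inE; case: (0 < k).
Qed.

Lemma mem_wn k n c : 0 < k -> (c \in wn k n) = (c <= n).
Proof.
move=> k0; rewrite /wn !mem_cat mem_fl k0 mem_iota !inE /=.
case: c => [|c] //=; lia.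
Qed.

Lemma map_fl (A : pred nat) k s : map A (fl k s) = flatten [seq nseq k (A i) | i <- s].
Proof. by elim: s => [//|i s IH]; rewrite /fl /= map_cat map_nseq -/(fl k s) IH. Qed.

Lemma fl_allF (A : pred nat) k s : (forall i, i \in s -> ~~ A i) -> all negb (map A (fl k s)).
Proof.
move=> h; rewrite all_map; apply/allP => x; rewrite mem_fl => /andP[_ /h] /=.
done.
Qed.

Lemma iota_split n c : 0 < c <= n -> iota 1 n = iota 1 c.-1 ++ c :: iota c.+1 (n - c).
Proof.
move=> hc; have -> : n = c.-1 + (n - c).+1 by lia.
rewrite iotaD /=; congr (_ ++ _ :: _); first lia.
congr iota; lia.
Qed.

Lemma runs_wn_c k n c : 0 < k -> 0 < c <= n -> runs (map (pred1 c) (wn k n)) = 1.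
Proof.
move=> k0 hc.
have -> : map (pred1 c) (wn k n) = (false :: map (pred1 c) (fl k (iota 1 c.-1))) ++ nseq k true ++
   (map (pred1 c) (fl k (iota c.+1 (n - c))) ++ [:: false]).
  have c0 : (0 == c) = false by apply/eqP; lia.
  rewrite /wn (iota_split hc) /fl map_cat flatten_cat /= map_cat /= map_cat c0 map_cat /pw map_nseq /= eqxx.
  by rewrite -!catA.
apply: runs_one.
- rewrite /= fl_allF // => i; rewrite mem_iota /= => hi; apply/negP => /eqP; lia.
- by rewrite all_nseq orbT.
- by case: k k0.
- rewrite all_cat fl_allF // => i; rewrite mem_iota => hi; apply/negP => /eqP; lia.
Qed.

Lemma runs_wn_z k n : 0 < k -> 0 < n -> runs (map (predC1 0) (wn k n)) = 1.
Proof.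
move=> k0 n0; rewrite /wn !map_cat.
apply: runs_one => //.
- rewrite all_map; apply/allP => x; rewrite mem_fl mem_iota /=; lia.
- case: n n0 => // n _; case: k k0 => // k _; by [].
Qed.

Lemma fy_wn k n : 0 < k -> 0 < n -> fy (wn k n) = 1.
Proof. by case: n => // n; case: k => // k _ _. Qed.

Lemma fy_wn' k n : 0 < k -> 0 < n -> fy (wn' k n) = n.
Proof.
move=> k0 n0; have -> : n = n.-1 + 1 by lia.
rewrite /wn' iotaD rev_cat /= /fy /= filter_cat /=.
have -> : 1 + n.-1 = n.-1.+1 by lia.
rewrite addn1; case: k k0 => // k _ /=; by [].
Qed.

Lemma flatten_seq1 (A : pred nat) (s : seq nat) : flatten [seq [:: A c] | c <- s] = map A s.
Proof. by elim: s => //= c s ->. Qed.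

Lemma tin (A : pred nat) l x : x \in l -> A x -> true \in map A l.
Proof. by move=> xl ax; apply/mapP; exists x => //; rewrite ax. Qed.

Lemma split_first (s : seq nat) : has (predC1 0) s ->
  exists g0 ga g1, [/\ s = g0 ++ ga :: g1, all (pred1 0) g0 & ga != 0].
Proof.
elim: s => [//|x s IH] /= /orP[hx|/IH [g0 [ga [g1 [e z ga0]]]]].
  by exists [::], x, s.
case: (eqVneq x 0) => [x0|x0]; last by exists [::], x, s.
by exists (x :: g0), ga, g1; rewrite e /= x0 eqxx.
Qed.

Lemma split_occ (r : nat) (s : seq nat) : r \in s -> exists s1 s2, s = s1 ++ r :: s2 /\ r \notin s1.
Proof.
elim: s => [//|x s IH]; rewrite inE => /orP[/eqP ->|/IH [s1 [s2 [e n]]]].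
  by exists [::], s.
case: (eqVneq r x) => [->|rx]; first by exists [::], s.
by exists (x :: s1), s2; rewrite e inE negb_or rx.
Qed.

Lemma pigeon (u : seq nat) (th : nat -> seq nat) n :
  (forall c, 0 < c <= n -> c \in flatten (map th u)) -> size (undup u) < n ->
  exists r, r \in u /\ exists c d, [/\ c != d, c != 0, d != 0, c \in th r & d \in th r].
Proof.
move=> hc hs; apply: NNPP => hno.
pose f c := nth 0 u (find (fun t => c \in th t) u).
have hf : forall c, 0 < c <= n -> (f c \in u) && (c \in th (f c)).
  move=> c /hc /flattenP [s /mapP [t tu ->] ct].
  have hh : has (fun t => c \in th t) u by apply/hasP; exists t.
  by rewrite mem_nth ?(nth_find 0 hh) // -has_find.
have inj : {in iota 1 n &, injective f}.
  move=> c d; rewrite !mem_iota => hc' hd' e.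
  case: (eqVneq c d) => // ne; exfalso; apply: hno; exists (f c).
  have /andP[fu cf] := hf c (ltac:(lia)); have /andP[_ df] := hf d (ltac:(lia)).
  split=> //; exists c, d; split=> //; try (apply/negP => /eqP; lia).
  by rewrite e.
have u1 : uniq (map f (iota 1 n)) by rewrite map_inj_in_uniq // iota_uniq.
have sub : {subset map f (iota 1 n) <= undup u}.
  move=> x /mapP [c]; rewrite mem_iota => hc' ->; rewrite mem_undup.
  by have /andP[] := hf c (ltac:(lia)).
have := uniq_leq_size u1 sub; rewrite size_map size_iota; lia.
Qed.

Section Main.
Variables (T : Type) (mul : T -> T -> T) (mulA : associative mul) (E F : T) (k n : nat).
Hypotheses (EE : mul E E = E) (FF : mul F F = F) (k1 : 1 < k)
  (Gper : rp mul (G mul E F) k.+1 = rp mul (G mul E F) 1)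
  (wit : eg mul E F 1 <> eg mul E F k.+1) (n0 : 0 < n).

Local Notation sat := (satisfies mul).
Local Notation EFf := (EF E F).

Lemma bridge u v (psi : nat -> seq bool) L R : sat u v -> u <> [::] -> v <> [::] ->
  (forall t, psi t <> [::]) ->
  evl mul EFf E (L ++ flatten (map psi u) ++ R) = evl mul EFf E (L ++ flatten (map psi v) ++ R).
Proof.
move=> s un vn hp; apply: evl_ctx => //.
- by case: (u) un => // t u' _ /=; case: (psi t) (hp t).
- by case: (v) vn => // t v' _ /=; case: (psi t) (hp t).
rewrite (evl_flatten mulA _ _ E) // (evl_flatten mulA _ _ E) //.
by rewrite -!eval_evl s.
Qed.

Lemma val_evl l : valb mul E F l = evl mul EFf E ([:: false] ++ l ++ [:: false]).
Proof. by []. Qed.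

Lemma runs_eq u v (A : pred nat) : sat u v -> u <> [::] -> v <> [::] ->
  eg mul E F (runs (map A u)) = eg mul E F (runs (map A v)).
Proof.
move=> s un vn; rewrite -!(valE mulA EE FF) !val_evl -!flatten_seq1.
exact: bridge.
Qed.

Lemma wform w : sat w (wn k n) -> w <> [::] ->
  [/\ forall c, (c \in w) = (c <= n), CY w & CZ w].
Proof.
move=> s wne.
have wnn : wn k n <> [::] by [].
have k0 : 0 < k by lia.
have cont : forall c, (c \in w) = (c <= n).
  move=> c; rewrite -(mem_wn n c k0).
  have := eg_zero mulA k1 Gper wit (runs_eq (pred1 c) s wne wnn).
  have nz : forall l, c \notin l -> runs (map (pred1 c) l) = 0.
    move=> l cl; apply: runs_zero; apply/mapP => [[x xl e]].
    by move: e => /esym /eqP ex; move: cl; rewrite -ex xl.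
  have pz : forall l, c \in l -> 0 < runs (map (pred1 c) l).
    by move=> l cl; apply: runs_pos; apply/mapP; exists c; rewrite /= ?eqxx.
  case: (boolP (c \in w)) => cw; case: (boolP (c \in wn k n)) => cwn //.
  - by rewrite (nz _ cwn) eqxx => /eqP h; have := pz _ cw; rewrite h.
  - by rewrite (nz _ cw) eqxx => /esym /eqP h; have := pz _ cwn; rewrite h.
split=> //.
- move=> c c0 w1 w2 w3 ew cw1 cw3.
  have cw : c \in w by rewrite ew mem_cat cw1.
  have cn : 0 < c <= n by rewrite -cont cw; lia.
  apply: (runs_contig_map (A := pred1 c) _ ew).
  + apply/eqP; rewrite (eg_one mulA k1 Gper wit _ _ (runs_eq (pred1 c) s wne wnn)).
    * by rewrite runs_wn_c.
    * by apply: runs_pos; apply: (tin cw); rewrite /= eqxx.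
    * by apply: runs_pos; apply: (@tin _ _ c); rewrite /= ?eqxx ?mem_wn //; lia.
  + by apply/hasP; exists c; rewrite /= ?eqxx.
  + by apply/hasP; exists c; rewrite /= ?eqxx.
- move=> w1 w2 w3 ew h1 h3.
  apply: (runs_contig_map (A := predC1 0) _ ew) => //.
  apply/eqP; rewrite (eg_one mulA k1 Gper wit _ _ (runs_eq (predC1 0) s wne wnn)).
  + by rewrite runs_wn_z.
  + by case/hasP: h1 => x xw1 hx; apply: runs_pos; apply: (tin (x := x)) => //; rewrite ew mem_cat xw1.
  + by apply: runs_pos; apply: (@tin _ _ 1); rewrite ?mem_wn //; lia.
Qed.

Lemma bridge_runs u v (psi : nat -> seq bool) L R : sat u v -> u <> [::] -> v <> [::] ->
  (forall t, psi t <> [::]) ->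
  eg mul E F (runs (L ++ flatten (map psi u) ++ R)) = eg mul E F (runs (L ++ flatten (map psi v) ++ R)).
Proof.
move=> su un vn hp; rewrite -!(valE mulA EE FF) !val_evl.
have e : forall X, [:: false] ++ (L ++ X ++ R) ++ [:: false] = ([:: false] ++ L) ++ X ++ (R ++ [:: false]).
  by move=> X; rewrite -!catA.
by rewrite !e; apply: bridge.
Qed.

Lemma subst_ne th u : (forall x, th x != [::]) -> u <> [::] -> subst_word th u <> [::].
Proof. by move=> h; case: u => // t u _; rewrite /subst_word /=; case: (th t) (h t). Qed.

Lemma once th p q u1 r u2 g0 ga g1 d : CY (p ++ subst_word th (u1 ++ r :: u2) ++ q) ->
  th r = g0 ++ ga :: g1 -> d \in g1 -> d != ga -> ga != 0 -> r \notin u2.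
Proof.
move=> cy eth dg dga ga0; apply/negP => ru2.
have [u2a [u2b eu2]] : exists u2a u2b, u2 = u2a ++ r :: u2b.
  by case/splitPr: ru2 => a b; exists a, b.
have := cy ga ga0 (p ++ subst_word th u1 ++ g0 ++ [:: ga])
   (g1 ++ subst_word th u2a ++ g0) (ga :: g1 ++ subst_word th u2b ++ q).
have -> : p ++ subst_word th (u1 ++ r :: u2) ++ q = (p ++ subst_word th u1 ++ g0 ++ [:: ga]) ++
   (g1 ++ subst_word th u2a ++ g0) ++ (ga :: g1 ++ subst_word th u2b ++ q).
  rewrite eu2 /subst_word map_cat flatten_cat /= map_cat flatten_cat /= eth.
  by rewrite -?catA /= -?catA /= -?catA /= -?catA.
have m1 : ga \in p ++ subst_word th u1 ++ g0 ++ [:: ga] by memt.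
have m3 : ga \in ga :: g1 ++ subst_word th u2b ++ q by memt.
move=> /(_ erefl m1 m3).
rewrite all_cat => /andP[/allP /(_ d dg) /= /eqP de _].
by rewrite de eqxx in dga.
Qed.

Lemma notQ X g0 ga g1 Y d : CY (X ++ (g0 ++ ga :: g1) ++ Y) -> d \in g1 -> d != ga -> ga != 0 ->
  ga \notin Y.
Proof.
move=> cy dg dga ga0; apply/negP => gY.
have := cy ga ga0 (X ++ g0 ++ [:: ga]) g1 Y.
have m1 : ga \in X ++ g0 ++ [:: ga] by memt.
rewrite -!catA /= => /(_ erefl m1 gY).
by move/allP => /(_ d dg) /= /eqP de; rewrite de eqxx in dga.
Qed.

Lemma step_fy u v th p q :
  sat u v -> u <> [::] -> v <> [::] -> (forall x, th x != [::]) -> size (undup u) < n ->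
  sat (p ++ subst_word th u ++ q) (wn k n) -> sat (p ++ subst_word th v ++ q) (wn k n) ->
  fy (p ++ subst_word th u ++ q) = fy (p ++ subst_word th v ++ q).
Proof.
move=> su un vn thn hsz sa sb.
have sun := subst_ne thn un; have svn := subst_ne thn vn.
have ane : p ++ subst_word th u ++ q <> [::] by case: (p) => //; case: (subst_word th u) sun.
have bne : p ++ subst_word th v ++ q <> [::] by case: (p) => //; case: (subst_word th v) svn.
have [ca cya cza] := wform sa ane.
have [cb cyb czb] := wform sb bne.
case hp: (has (predC1 0) p); first by rewrite !fy_cat.
have mapth : forall (A : pred nat) w, map A (subst_word th w) = flatten (map (fun t => map A (th t)) w).
  by move=> A w; rewrite /subst_word map_flatten -map_comp.
have thn' : forall (A : pred nat) t, map A (th t) <> [::] by move=> A t; case: (th t) (thn t).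
case hq: (has (predC1 0) q).
  have [g0 [ga [g1 [eq z0 ga0]]]] := split_first hq.
  have E1 : forall X, (p ++ X) ++ q ++ [::] = p ++ X ++ q by move=> X; rewrite cats0 catA.
  have := @core (p ++ subst_word th u) q [::] (p ++ subst_word th v) [::] g0 ga g1.
  rewrite !E1; apply => //.
  - by move=> c; rewrite ca cb.
  - move=> A A0.
    have ht : forall w, true \in map A (p ++ w) ++ [:: true; false] ++ map A [::].
      by move=> w; rewrite !mem_cat inE eqxx /= orbT.
    apply: (eg_one mulA k1 Gper wit); try exact: runs_pos.
    have e : forall w, map A (p ++ subst_word th w) ++ [:: true; false] ++ map A [::] =
      map A p ++ flatten (map (fun t => map A (th t)) w) ++ [:: true; false].
      by move=> w; rewrite map_cat mapth -!catA.
    by rewrite !e; apply: bridge_runs.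
have allu : forall c, 0 < c <= n -> c \in flatten (map th u).
  move=> c hc; have : c \in p ++ subst_word th u ++ q by rewrite ca; lia.
  have c0 : c != 0 by apply/negP => /eqP; lia.
  rewrite !mem_cat => /orP[cp|/orP[//|cq]].
  - by move/negbT/hasPn: hp => /(_ c cp) /=; rewrite c0.
  - by move/negbT/hasPn: hq => /(_ c cq) /=; rewrite c0.
have [r [ru [c [d [cd c0 d0 cr dr]]]]] := pigeon allu hsz.
have hnz : has (predC1 0) (th r) by apply/hasP; exists c.
have [g0 [ga [g1 [eth z0 ga0]]]] := split_first hnz.
have [d' [dg dga]] : exists d', d' \in g1 /\ d' != ga.
  have ing : forall x, x \in th r -> x != 0 -> x != ga -> x \in g1.
    move=> x; rewrite eth mem_cat inE => /orP[xg0|/orP[/eqP ->|//]].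
    + by move/allP: z0 => /(_ x xg0) /= /eqP ->; rewrite eqxx.
    + by rewrite eqxx.
  case: (eqVneq c ga) => [cga|cga].
  + exists d; split; last by rewrite -cga eq_sym.
    by apply: ing => //; rewrite -cga eq_sym.
  + by exists c; split => //; apply: ing.
have [u1 [u2 [eu ru1]]] := split_occ ru.
have ru2 : r \notin u2 by apply: (once (p := p) (q := q) (th := th) (u1 := u1) _ eth dg dga ga0); rewrite -eu.
have rv : r \in v.
  apply/negPn/negP => rv.
  have h1 := eg_zero mulA k1 Gper wit (runs_eq (pred1 r) su un vn).
  rewrite (runs_zero (l := map (pred1 r) v)) ?eqxx in h1; last first.
    by apply/mapP => [[x xv /esym /eqP ex]]; move: rv; rewrite -ex xv.
  have h2 := runs_pos (tin (A := pred1 r) ru (eqxx r)).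
  by rewrite (eqP h1) in h2.
have [v1 [v2 [ev rv1]]] := split_occ rv.
have rv2 : r \notin v2 by apply: (once (p := p) (q := q) (th := th) (u1 := v1) _ eth dg dga ga0); rewrite -ev.
have Ea : forall w1 w2, p ++ subst_word th (w1 ++ r :: w2) ++ q =
    (p ++ subst_word th w1) ++ th r ++ (subst_word th w2 ++ q).
  by move=> w1 w2; rewrite /subst_word map_cat flatten_cat /= -!catA.
rewrite eu ev !Ea.
have cya' := cya; have cyb' := cyb; rewrite eu Ea in cya'; rewrite ev Ea in cyb'.
have cza' := cza; have czb' := czb; rewrite eu Ea in cza'; rewrite ev Ea in czb'.
apply: (core cya' cza' cyb' czb' _ eth z0 ga0).
- by move=> x; rewrite -!Ea -eu -ev ca cb.
- by have := cya'; rewrite eth => h; exact: (notQ h dg dga ga0).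
- by have := cyb'; rewrite eth => h; exact: (notQ h dg dga ga0).
move=> A A0.
pose psi t := if t == r then [:: true; false] else map A (th t).
have hpsi : forall t, psi t <> [::] by move=> t; rewrite /psi; case: (t == r).
have fl : forall w1 w2, r \notin w1 -> r \notin w2 ->
    flatten (map psi (w1 ++ r :: w2)) = map A (subst_word th w1) ++ [:: true; false] ++ map A (subst_word th w2).
  move=> w1 w2 n1 n2; rewrite map_cat flatten_cat /= {2}/psi eqxx !mapth.
  have ei : forall w, r \notin w -> map psi w = map (fun t => map A (th t)) w.
    move=> w nw; apply/eq_in_map => t tw; rewrite /psi.
    by case: (eqVneq t r) => [etr|//]; rewrite -etr tw in nw.
  by rewrite !ei.
have e : forall w1 w2, r \notin w1 -> r \notin w2 ->
    map A (p ++ subst_word th w1) ++ [:: true; false] ++ map A (subst_word th w2 ++ q) =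
    map A p ++ flatten (map psi (w1 ++ r :: w2)) ++ map A q.
  by move=> w1 w2 n1 n2; rewrite fl // !map_cat -!catA.
rewrite e // e //.
apply: (eg_one mulA k1 Gper wit); try (apply: runs_pos; rewrite fl // !mem_cat inE eqxx /= !orbT //).
rewrite -eu -ev; exact: bridge_runs.
Qed.
End Main.

Section Final.
Variables (T : Type) (mul : T -> T -> T) (mulA : associative mul).
Local Notation sat := (satisfies mul).

Lemma sat_sym u v : sat u v -> sat v u.
Proof. by move=> h phi d; rewrite h. Qed.

Lemma sat_trans u v w : sat u v -> sat v w -> sat u w.
Proof. by move=> h1 h2 phi d; rewrite h1 h2. Qed.

Lemma sound (Sig : seq identity) :
  (forall e, e \in Sig -> [/\ e.1 != [::], e.2 != [::] & sat e.1 e.2]) ->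
  forall a b, derivable Sig a b -> sat a b.
Proof.
move=> hS a b; elim => {a b}.
- by [].
- by move=> u v _; apply: sat_sym.
- by move=> u v w _ h1 _ h2; apply: sat_trans h1 h2.
- move=> u v th p q uv thn phi d.
  have [un vn s] := hS _ uv.
  have un' : u <> [::] by move=> e; rewrite e in un.
  have vn' : v <> [::] by move=> e; rewrite e in vn.
  rewrite !eval_evl; apply: evl_ctx => //.
  - exact: subst_ne.
  - exact: subst_ne.
  rewrite /subst_word.
  have thn' : forall t, th t <> [::] by move=> t e; move: (thn t); rewrite e.
  rewrite (evl_flatten mulA _ _ d) // (evl_flatten mulA _ _ d) //.
  by rewrite -!eval_evl s.
Qed.

Lemma foldl_nseq (f : nat -> T) b j c :
  foldl (fun acc y => mul acc (f y)) b (nseq j c) = iter j (fun y => mul y (f c)) b.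
Proof. by elim: j b => [//|j IH] b; rewrite [LHS]/= IH iterSr. Qed.

Lemma eval_pw phi d j c : eval_word mul phi (pw j.+1 c) d = rp mul (phi c) j.
Proof. by rewrite /pw /= foldl_nseq. Qed.

Variables (E F : T) (k n : nat).
Hypotheses (EE : mul E E = E) (FF : mul F F = F) (k1 : 1 < k)
  (Gper : rp mul (G mul E F) k.+1 = rp mul (G mul E F) 1)
  (wit : eg mul E F 1 <> eg mul E F k.+1) (n0 : 0 < n).

Lemma der_fy (Sig : seq identity) :
  (forall e, e \in Sig -> [/\ e.1 != [::], e.2 != [::] & sat e.1 e.2]) ->
  (forall e, e \in Sig -> size (undup e.1) < n) ->
  forall a b, derivable Sig a b -> sat a (wn k n) -> fy a = fy b.
Proof.
move=> hS hB a b; elim => {a b}.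
- by [].
- move=> u v d IH sv; have suv := sound hS d.
  by rewrite IH //; apply: sat_trans suv sv.
- move=> u v w d1 IH1 d2 IH2 su.
  have suv := sound hS d1.
  rewrite IH1 // IH2 //; apply: sat_trans (sat_sym suv) su.
- move=> u v th p q uv thn sa.
  have [un vn s] := hS _ uv.
  have un' : u <> [::] by move=> e; rewrite e in un.
  have vn' : v <> [::] by move=> e; rewrite e in vn.
  have sab := sound hS (der_step p q uv thn).
  apply: (step_fy mulA EE FF k1 Gper wit n0 s un' vn' thn (hB _ uv) sa).
  exact: sat_trans (sat_sym sab) sa.
Qed.
End Final.

Lemma flatten_nseqS (X : seq nat) j : flatten (nseq j.+1 X) = flatten (nseq j X) ++ X.
Proof. by rewrite -addn1 nseqD flatten_cat /= cats0.
Qed.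

Unset Implicit Arguments.
Theorem theorem5p2 (k : nat) (T : Type) (mul : T -> T -> T)
  (mulA : associative mul) :
  1 < k ->
  (forall n, 1 < n ->
     satisfies mul
       ([:: 0] ++ flatten [seq pw k i | i <- iota 1 n] ++ [:: 0])
       ([:: 0] ++ flatten [seq pw k i | i <- rev (iota 1 n)] ++ [:: 0])) ->
  ~ satisfies mul (pw k 0 ++ pw k 1 ++ pw k 0)
                  (pw k 0 ++ flatten (nseq k.+1 (pw k 1 ++ pw k 0))) ->
  satisfies mul (pw k.+2 0) [:: 0; 0] ->
  satisfies mul (pw k.+1 0 ++ [:: 1; 0]) [:: 0; 1; 0] ->
  satisfies mul ([:: 0; 1] ++ pw k.+1 0) [:: 0; 1; 0] ->
  non_finitely_based mul.
Proof.
move=> k1 hi hii hiii _ _ [Sig [hS hder]].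
apply: hii => phi d; apply: NNPP => hne.
have per : forall x, rp mul x k.+1 = rp mul x 1.
  by move=> x; have := hiii (fun _ => x) x; rewrite (eval_pw mul).
have idem : forall x, mul (rp mul x k.-1) (rp mul x k.-1) = rp mul x k.-1.
  move=> x; rewrite rp_add // -[in RHS](rp_per (per x) (j := k.-1)); last lia.
  congr rp; lia.
set E := rp mul (phi 0) k.-1; set F := rp mul (phi 1) k.-1.
have EE : mul E E = E := idem _.
have FF : mul F F = F := idem _.
have Gper := per (G mul E F).
have pwk : forall c, eval_word mul phi (pw k c) d = rp mul (phi c) k.-1.
  by move=> c; rewrite -(eval_pw mul phi d); do 2 f_equal; lia.
have pwn : forall c, pw k c <> [::] by move=> c; case: k k1 {pwk idem per hi hiii hne E F EE FF Gper}.
have pwn2 : pw k 1 ++ pw k 0 <> [::] by case: (pw k 1) (pwn 1).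
have ne0 : forall s, pw k 0 ++ s <> [::] by move=> s; case: (pw k 0) (pwn 0).
have eX : evl mul phi d (pw k 1 ++ pw k 0) = mul F E.
  by rewrite (evl_cat mulA) // -!eval_evl !pwk.
have gen : forall j, evl mul phi d (pw k 0 ++ flatten (nseq j (pw k 1 ++ pw k 0))) = eg mul E F j.
  elim=> [|j IH]; first by rewrite /= cats0 -eval_evl pwk.
  rewrite flatten_nseqS catA (evl_cat mulA) ?IH ?eX //.
have lhs : evl mul phi d (pw k 0 ++ pw k 1 ++ pw k 0) = eg mul E F 1.
  by rewrite (evl_cat mulA) // eX -eval_evl pwk.
have wit : eg mul E F 1 <> eg mul E F k.+1.
  by move=> e; apply: hne; rewrite !eval_evl lhs gen.
have hB0 : forall S : seq identity, forall e, e \in S ->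
    size (undup e.1) < (foldr (fun e m => maxn (size (undup e.1)) m) 0 S).+2.
  elim=> [//|e0 s IH] e; rewrite inE => /orP[/eqP ->|/IH h] /=.
    by rewrite ltnS (leq_trans (leq_maxl _ _) (leqnSn _)).
  by apply: (leq_trans h); rewrite !ltnS leq_maxr.
set m := foldr (fun e m => maxn (size (undup e.1)) m) 0 Sig.
have hB := hB0 Sig.
have n1 : 1 < m.+2 by [].
have s := hi _ n1.
have dd : derivable Sig (wn k m.+2) (wn' k m.+2) by apply: hder => //.
have := der_fy mulA EE FF k1 Gper wit (isT : 0 < m.+2) hS hB dd (fun _ _ => erefl).
by rewrite fy_wn ?fy_wn' //; lia.
Qed.
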